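(* Let $\mathcal T\in\Sigma^n$ be a text and fix $\pi=\mathrm{IPA}$. Suppose we have access to a text oracle supporting the extraction of $\ell$ contiguous characters of $\mathcal T$ with $O(1+\ell/B)$ I/O complexity. There is a search algorithm that requires just the array $\mathtt{st\text{-}colex}^-$, fitting in $|\mathtt{st\text{-}colex}^-|\le\bar r$ words, on top of the text oracle, and locates the primary occurrence of any $P\in\Sigma^m$ (i.e., the occurrence $\mathcal T[i,i+m-1]=P$ minimizing $\mathrm{IPA}[i]$) with $O(d\log|\mathtt{st\text{-}colex}^-|\cdot(1+m/B))\subseteq O(d\log\bar r\cdot(1+m/B))$ I/O complexity, where $d$ is the node depth of $\mathrm{locus}(P)$ in the suffix tree of $\mathcal T$.
   Context: A text is a string $\mathcal T\in\Sigma^n$ over an integer alphabet whose last symbol $\mathcal T[n]=\$$ occurs only there and is smallest. $B$ is the number of integers per I/O block. $\mathrm{IPA}[i]$ is the colexicographic rank of prefix $\mathcal T[1,i]$ among all prefixes. For $i\ne j$, $\mathrm{rlce}(i,j)$ is the length of the longest common prefix of $\mathcal T[i,n]$ and $\mathcal T[j,n]$. With $\pi=\mathrm{IPA}$, $\mathrm{LPF}_\pi[i]=0$ if $\pi(i)=1$, else $\mathrm{LPF}_\pi[i]=\max_{\pi(j)<\pi(i)}\mathrm{rlce}(j,i)$, and $\mathtt{st\text{-}colex}^-$ is the set $\{i+\mathrm{LPF}_\pi[i]:i\in[n]\}$ sorted colexicographically by prefixes $\mathcal T[1,j]$. $\bar r$ is the number of maximal equal-letter runs of the string obtained by sorting all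 rotations of $\mathcal T$ colexicographically and concatenating their first characters. The node depth of $\mathrm{locus}(P)$ is the number of suffix tree edges traversed (including a partially traversed last edge) when reading $P$ from the root. *)

(* Defs.v *)
From mathcomp Require Import all_boot.
Set Implicit Arguments. Unset Strict Implicit. Unset Printing Implicit Defensive.

Fixpoint lex_lt (s t : seq nat) : bool :=
  match s, t with
  | [::], [::] => false
  | [::], _ :: _ => true
  | _ :: _, [::] => false
  | x :: s', y :: t' => (x < y) || ((x == y) && lex_lt s' t')
  end.

Definition colex_lt (s t : seq nat) : bool := lex_lt (rev s) (rev t).

(* T is a text: nonempty, last symbol $ occurs only there and is smallest *)
Definition is_text (T : seq nat) : bool :=
  (0 < size T) && all (fun x => last 0 T < x) (take (size T).-1 T).

(* 1-indexed substring T[i, i+l-1] (truncated at the end of T) *)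
Definition extract (T : seq nat) (i l : nat) : seq nat := take l (drop i.-1 T).

(* prefix T[1,i] and suffix T[i,n] (1-indexed) *)
Definition prefix_of (T : seq nat) (i : nat) : seq nat := take i T.
Definition suffix_of (T : seq nat) (i : nat) : seq nat := drop i.-1 T.

Definition IPA (T : seq nat) (i : nat) : nat :=
  (count (fun j => colex_lt (prefix_of T j) (prefix_of T i)) (iota 1 (size T))).+1.

Fixpoint lcp (s t : seq nat) : nat :=
  match s, t with
  | x :: s', y :: t' => if x == y then (lcp s' t').+1 else 0
  | _, _ => 0
  end.

Definition rlce (T : seq nat) (i j : nat) : nat := lcp (suffix_of T i) (suffix_of T j).

Definition LPF (T : seq nat) (i : nat) : nat :=
  if IPA T i == 1 then 0
  else \max_(j <- iota 1 (size T) | IPA T j < IPA T i) rlce T j i.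

Definition st_colex_minus (T : seq nat) : seq nat :=
  sort (fun a b => ~~ colex_lt (prefix_of T b) (prefix_of T a))
       (undup [seq i + LPF T i | i <- iota 1 (size T)]).

Definition runs (s : seq nat) : nat :=
  match s with
  | [::] => 0
  | x :: s' => (count id [seq p.1 != p.2 | p <- zip (x :: s') s']).+1
  end.

Definition rbar (T : seq nat) : nat :=
  runs [seq head 0 u | u <- sort (fun u v => ~~ colex_lt v u)
                                 [seq rot k T | k <- iota 0 (size T)]].

Definition occurs (T P : seq nat) (i : nat) : bool :=
  (1 <= i) && (i <= size T) && (extract T i (size P) == P).

Definition is_primary (T P : seq nat) (i : nat) : Prop :=
  occurs T P i /\ forall j, occurs T P j -> IPA T i <= IPA T j.

Definition followers (T u : seq nat) : seq nat :=
  [seq nth 0 T (i.-1 + size u) |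
     i <- iota 1 (size T) & (i.-1 + size u < size T) && (extract T i (size u) == u)].

(* u is right-maximal: followed by at least two distinct characters;
   these (nonempty) strings are the internal nodes of the suffix tree *)
Definition right_maximal (T u : seq nat) : bool := 1 < size (undup (followers T u)).

(* explicit non-root nodes of the suffix tree of T: internal nodes and leaves *)
Definition st_node (T u : seq nat) : bool :=
  (u != [::]) && (right_maximal T u || (u \in [seq suffix_of T i | i <- iota 1 (size T)])).

(* node depth of locus(P) (P nonempty, occurring in T): number of edges
   traversed, the partially traversed last edge included, when reading P
   from the root = 1 + number of explicit non-root nodes spelling a proper
   nonempty prefix of P *)
Definition locus_node_depth (T P : seq nat) : nat :=
  (count (fun k => st_node T (take k P)) (iota 1 (size P).-1)).+1.

(* A program interacts with
   - the text oracle: Extract i l returns T[i, i+l-1], cost 1 + l/B I/Os;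
   - the stored array A (= st-colex^-), read by blocks of B words:
     ReadBlock b returns A[b*B .. b*B+B-1] (0-indexed), cost 1 I/O.
   Internal computation is free (standard I/O model). *)
Inductive prog : Type :=
| Ret of nat
| Extract of nat & nat & (seq nat -> prog)
| ReadBlock of nat & (seq nat -> prog).

Fixpoint run (T A : seq nat) (B : nat) (p : prog) : nat * nat :=
  match p with
  | Ret a => (a, 0)
  | Extract i l k =>
      let r := run T A B (k (extract T i l)) in (r.1, 1 + l %/ B + r.2)
  | ReadBlock b k =>
      let r := run T A B (k (take B (drop (b * B) A))) in (r.1, r.2.+1)
  end.

(* Main.v *)
Require Import Defs.
From mathcomp Require Import all_boot zify.
Set Implicit Arguments. Unset Strict Implicit. Unset Printing Implicit Defensive.

Lemma lex_irr s : lex_lt s s = false.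
Proof. by elim: s => //= x s ->; rewrite ltnn eqxx. Qed.

Lemma lex_nil s : lex_lt s [::] = false.
Proof. by case: s. Qed.

Lemma lex_trans a b c : lex_lt a b -> lex_lt b c -> lex_lt a c.
Proof.
elim: a b c => [|x a IH] [|y b] [|z c] //=.
case/orP=> [xy|/andP[/eqP-> ab]]; case/orP=> [yz|/andP[/eqP<- bc]].
- by rewrite (ltn_trans xy yz).
- by rewrite xy.
- by rewrite yz.
- by rewrite eqxx (IH _ _ ab bc) orbT.
Qed.

Lemma lex_total a b : a <> b -> lex_lt a b || lex_lt b a.
Proof.
elim: a b => [|x a IH] [|y b] //= neq.
case: (ltngtP x y) => //= xy; rewrite ?orbT //.
subst y; rewrite /= ?eqxx ?ltnn /=; apply: IH => E; by apply: neq; rewrite E.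
Qed.

Lemma lex_asym a b : lex_lt a b -> ~~ lex_lt b a.
Proof.
move=> ab; apply/negP=> ba; have := lex_trans ab ba; by rewrite lex_irr.
Qed.

Lemma lex_tri a b : ~~ lex_lt a b -> a = b \/ lex_lt b a.
Proof.
move=> nab; case: (eqVneq a b) => [->|ne]; [by left|right].
have := lex_total (elimN eqP ne) ; by rewrite (negbTE nab).
Qed.

Lemma lex_le_trans a b c : ~~ lex_lt b a -> ~~ lex_lt c b -> ~~ lex_lt c a.
Proof.
move=> ba cb; apply/negP=> ca.
case: (lex_tri ba) => [E|ab]; first by subst; rewrite ca in cb.
case: (lex_tri cb) => [E|bc]; first by subst; rewrite ca in ba.
by have := lex_trans (lex_trans ab bc) ca; rewrite lex_irr.
Qed.

Lemma lex_cat z a b : lex_lt (z ++ a) (z ++ b) = lex_lt a b.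
Proof. by elim: z => //= x z ->; rewrite ltnn eqxx. Qed.

Lemma lex_catl a b x : size a = size b -> lex_lt (a ++ x) b = lex_lt a b.
Proof.
elim: a b => [|y a IH] [|z b] //=; first by rewrite lex_nil.
by case=> /IH ->.
Qed.

Lemma lex_interval W y1 y2 v :
  ~~ lex_lt v (W ++ y1) -> ~~ lex_lt (W ++ y2) v -> exists y, v = W ++ y.
Proof.
elim: W v => [|a W IH] v /=; first by exists v.
case: v => [|b v] //=.
rewrite !negb_or !negb_and => /andP[ba h1] /andP[ab h2].
have eab : a = b by lia.
subst b; rewrite eqxx /= in h1 h2.
by case: (IH v h1 h2) => y ->; exists y.
Qed.

Lemma lex_dollar z s t x y :
  all (fun c => z < c) s -> all (fun c => z < c) t -> s <> t ->
  lex_lt (s ++ z :: x) (t ++ z :: y) = lex_lt s t.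
Proof.
elim: s t => [|a s IH] [|b t] //=.
- by move=> _ /andP[zb _] _; rewrite zb.
- move=> /andP[za _] _ _; rewrite ltnNge (ltnW za) /=; by rewrite (gtn_eqF za).
- case/andP=> za hs /andP[zb ht] ne.
  case: (eqVneq a b) => [eab|nab]; last by rewrite !andFb.
  subst b; rewrite ltnn /= IH //; by move=> E; apply: ne; rewrite E.
Qed.

Lemma rev_inj (a b : seq nat) : rev a = rev b -> a = b.
Proof. exact: (can_inj revK). Qed.

Lemma colex_irr s : colex_lt s s = false.
Proof. exact: lex_irr. Qed.

Lemma colex_trans a b c : colex_lt a b -> colex_lt b c -> colex_lt a c.
Proof. exact: lex_trans. Qed.

Lemma colex_tri a b : ~~ colex_lt a b -> a = b \/ colex_lt b a.
Proof. by case/lex_tri => [/rev_inj ->|]; [left|right]. Qed.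

Lemma colex_asym a b : colex_lt a b -> ~~ colex_lt b a.
Proof. exact: lex_asym. Qed.

Lemma colex_le_trans a b c : ~~ colex_lt b a -> ~~ colex_lt c b -> ~~ colex_lt c a.
Proof. exact: lex_le_trans. Qed.

Lemma colex_catr x y u : colex_lt (x ++ u) (y ++ u) = colex_lt x y.
Proof. by rewrite /colex_lt !rev_cat lex_cat. Qed.

Lemma colex_total a b : a <> b -> colex_lt a b || colex_lt b a.
Proof. move=> ne; apply: lex_total => /rev_inj; exact: ne. Qed.

Lemma lcp_le_size s t : lcp s t <= size s.
Proof. elim: s t => [|x s IH] [|y t] //=; case: (x == y) => //; exact: IH. Qed.

Lemma lcp_le_sizer s t : lcp s t <= size t.
Proof. elim: s t => [|x s IH] [|y t] //=; case: (x == y) => //; exact: IH. Qed.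

Lemma lcp_take s t : take (lcp s t) s = take (lcp s t) t.
Proof.
elim: s t => [|x s IH] [|y t] //=; case: (eqVneq x y) => //= ->; by rewrite IH.
Qed.

Lemma lcp_ge l s t : l <= size s -> take l s = take l t -> l <= lcp s t.
Proof.
elim: s t l => [|x s IH] [|y t] [|l] //=.
move=> hl [-> e]; rewrite eqxx ltnS; exact: IH.
Qed.

Lemma lcp_ge_take l s t : l <= lcp s t -> take l s = take l t.
Proof.
move=> hl; have := lcp_take s t.
move=> /(congr1 (take l)); rewrite !take_takel //.
Qed.

Lemma lcp_nth s t : lcp s t < size s -> lcp s t < size t ->
  nth 0 s (lcp s t) != nth 0 t (lcp s t).
Proof.
elim: s t => [|x s IH] [|y t] //=; case: (eqVneq x y) => //= _ ; exact: IH.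
Qed.

Lemma text_pos (T : seq nat) : is_text T -> 0 < size T.
Proof. by case/andP. Qed.

Lemma text_lt (T : seq nat) p : is_text T -> p < (size T).-1 -> last 0 T < nth 0 T p.
Proof.
case/andP=> _ /(all_nthP 0) h hp.
have := h p; rewrite size_take.
have -> : (size T).-1 < size T by case: (size T) hp.
by rewrite nth_take //; apply.
Qed.

Lemma last_nth (T : seq nat) : 0 < size T -> last 0 T = nth 0 T (size T).-1.
Proof. by move=> _; rewrite nth_last. Qed.

Lemma take_inj (T : seq nat) a b : a <= size T -> b <= size T -> take a T = take b T -> a = b.
Proof. by move=> ha hb /(congr1 size); rewrite !size_takel. Qed.

Lemma take_rcons (T : seq nat) k : k < size T -> take k.+1 T = rcons (take k T) (nth 0 T k).
Proof. exact: take_nth. Qed.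

Lemma pre_n_min (T : seq nat) x : is_text T -> 1 <= x <= size T ->
  ~~ colex_lt (take x T) (take (size T) T).
Proof.
move=> hT /andP[x1 xn]; have n0 := text_pos hT.
case: (ltngtP x (size T)) xn => // [xlt|->] _; last by rewrite colex_irr.
rewrite /colex_lt.
have hn : size T = (size T).-1.+1 by case: (size T) n0.
rewrite [in take (size T) T]hn take_rcons; last by lia.
case: x x1 xlt => // x _ xlt.
rewrite take_rcons; last by lia.
rewrite !rev_rcons /= negb_or negb_and.
have h := text_lt (p := x) hT; rewrite last_nth // in h.
have hh : nth 0 T (size T).-1 < nth 0 T x by apply: h; lia.
by rewrite ltnNge (ltnW hh) /= (gtn_eqF hh).
Qed.

Lemma IPA_lt_of (T : seq nat) a b : 1 <= a <= size T -> colex_lt (take a T) (take b T) -> IPA T a < IPA T b.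
Proof.
move=> ha ab; rewrite /IPA ltnS.
set Pa := fun j => colex_lt (take j T) (take a T).
set Pb := fun j => colex_lt (take j T) (take b T).
have h1 := count_predUI Pa (pred1 a) (iota 1 (size T)).
have h2 : count (predI Pa (pred1 a)) (iota 1 (size T)) = 0.
  apply/eqP; rewrite -leqn0 leqNgt -has_count; apply/hasP => [[j _ /andP[pj /eqP ej]]].
  by move: pj; rewrite /Pa ej colex_irr.
have h3 : count (pred1 a) (iota 1 (size T)) = 1.
  rewrite (count_uniq_mem _ (iota_uniq _ _)) mem_iota; case/andP: ha => a1 an.
  by rewrite a1 /=; have -> : a < 1 + size T by lia.
have h4 : count (predU Pa (pred1 a)) (iota 1 (size T)) <= count Pb (iota 1 (size T)).
  apply: sub_count => j /orP [pj|/eqP ->] //; exact: colex_trans pj ab.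
change (count Pa (iota 1 (size T)) < count Pb (iota 1 (size T))); rewrite h2 h3 in h1; lia.
Qed.

Lemma IPA_lt (T : seq nat) a b : 1 <= a <= size T -> 1 <= b <= size T ->
  (IPA T a < IPA T b) = colex_lt (take a T) (take b T).
Proof.
move=> ha hb; case ab: (colex_lt _ _); first exact: IPA_lt_of.
apply/negbTE; rewrite -leqNgt.
case: (colex_tri (negbT ab)) => [E|ba].
  have -> : a = b by apply: (@take_inj T a b _ _ E); lia.
  by [].
by apply: ltnW; apply: IPA_lt_of.
Qed.

Lemma IPA_inj (T : seq nat) a b : 1 <= a <= size T -> 1 <= b <= size T -> IPA T a = IPA T b -> a = b.
Proof.
move=> ha hb e; case: (eqVneq a b) => // ne.
have ne' : take a T <> take b T by move=> E; move/negP: ne; apply; apply/eqP; apply: (@take_inj T a b _ _ E); lia.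
case/orP: (colex_total ne') => h.
- by have := IPA_lt_of ha h; rewrite e ltnn.
- by have := IPA_lt_of hb h; rewrite e ltnn.
Qed.

Lemma IPA_pos (T : seq nat) a : 0 < IPA T a.
Proof. by []. Qed.

Lemma bigmax_wit (r : seq nat) (P : pred nat) (F : nat -> nat) :
  0 < \max_(j <- r | P j) F j ->
  exists j, [/\ j \in r, P j & F j = \max_(j <- r | P j) F j].
Proof.
elim: r => [|x r IH]; first by rewrite big_nil.
rewrite big_cons; case: ifP => px.
- case: (leqP (\max_(j <- r | P j) F j) (F x)) => h.
    by move=> _; exists x; split; rewrite ?mem_head //; symmetry; apply/maxn_idPl.
  move=> /IH [j [jr pj e]].
  by exists j; rewrite inE jr orbT pj.
- by move=> /IH [j [jr pj e]]; exists j; rewrite inE jr orbT pj.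
Qed.

Lemma LPF_ge (T : seq nat) i j : 1 <= j <= size T -> IPA T j < IPA T i -> rlce T j i <= LPF T i.
Proof.
move=> hj lt; rewrite /LPF.
have -> : (IPA T i == 1) = false by apply/negbTE; move: lt; rewrite /IPA; lia.
apply: (leq_bigmax_seq (F := fun j => rlce T j i)) => //.
by rewrite mem_iota; lia.
Qed.

Lemma LPF_eq (T : seq nat) i L :
  (forall j, 1 <= j <= size T -> IPA T j < IPA T i -> rlce T j i <= L) ->
  (L = 0 \/ exists j, [/\ 1 <= j <= size T, IPA T j < IPA T i & L <= rlce T j i]) ->
  LPF T i = L.
Proof.
move=> hub hlb; rewrite /LPF; case: ifP => [/eqP i1|i1].
  case: hlb => [->//|[j [_ lt _]]]; by move: lt; rewrite i1 /IPA.
apply/eqP; rewrite eqn_leq; apply/andP; split.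
  apply/bigmax_leqP_seq => j; rewrite mem_iota => hj lt; apply: hub => //; lia.
case: hlb => [->//|[j [hj lt le]]].
by apply: (bigmaxn_sup_seq j) => //; rewrite mem_iota; lia.
Qed.

Lemma LPF_wit (T : seq nat) i : 0 < LPF T i ->
  exists j, [/\ 1 <= j <= size T, IPA T j < IPA T i & rlce T j i = LPF T i].
Proof.
rewrite /LPF; case: ifP => // _ /bigmax_wit [j [jr lt e]].
by exists j; split => //; move: jr; rewrite mem_iota; lia.
Qed.

Lemma LPF_bound (T : seq nat) i : is_text T -> 1 <= i <= size T -> i + LPF T i <= size T.
Proof.
move=> hT hi; case: (posnP (LPF T i)) => [->|pos]; first by rewrite addn0; case/andP: hi.
case: (LPF_wit pos) => j [hj lt <-].
have ne : j != i by apply/eqP => E; move: lt; rewrite E ltnn.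
rewrite /rlce /suffix_of.
have hs := lcp_le_sizer (drop j.-1 T) (drop i.-1 T); rewrite size_drop in hs.
have hs2 := lcp_le_size (drop j.-1 T) (drop i.-1 T); rewrite size_drop in hs2.
set L := lcp _ _ in hs hs2 *.
case: (ltngtP j i) ne => // ji _.
-
  case: (leqP L (size T - i)) => hL; first by lia.
  have eL : L = size T - i.-1 by lia.
  have ht := lcp_take (drop j.-1 T) (drop i.-1 T); rewrite -/L in ht.
  have := congr1 (nth 0 ^~ (size T - i)) ht.
  rewrite !nth_take; try lia.
  rewrite !nth_drop.
  have -> : i.-1 + (size T - i) = (size T).-1 by lia.
  rewrite -last_nth; last by lia.
  move=> E; have := text_lt (p := j.-1 + (size T - i)) hT.
  rewrite E ltnn; move=> h; exfalso; apply: notF; apply: h; lia.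
- lia.
Qed.

Definition leS (T : seq nat) := fun a b : nat => ~~ colex_lt (take b T) (take a T).

Lemma mem_S (T : seq nat) x : x \in st_colex_minus T -> exists i, 1 <= i <= size T /\ x = i + LPF T i.
Proof.
rewrite /st_colex_minus mem_sort mem_undup => /mapP [i]; rewrite mem_iota => hi ->.
by exists i; split => //; lia.
Qed.

Lemma S_mem (T : seq nat) i : 1 <= i <= size T -> i + LPF T i \in st_colex_minus T.
Proof.
move=> hi; rewrite /st_colex_minus mem_sort mem_undup; apply/mapP; exists i => //.
by rewrite mem_iota; lia.
Qed.

Lemma S_le_nth (T : seq nat) a b : a <= b -> b < size (st_colex_minus T) ->
  leS T (nth 0 (st_colex_minus T) a) (nth 0 (st_colex_minus T) b).
Proof.
move=> ab bs.
have tr : transitive (leS T) by move=> y x z; rewrite /leS => h1 h2; exact: colex_le_trans h1 h2.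
have rf : reflexive (leS T) by move=> x; rewrite /leS colex_irr.
have so : sorted (leS T) (st_colex_minus T).
  apply: sort_sorted => x y; rewrite /leS.
  by case h: (colex_lt (take y T) (take x T)) => //=; rewrite (negbTE (colex_asym h)).
apply: (sorted_leq_nth tr rf 0 so) => //; rewrite inE; lia.
Qed.

Definition phi (T : seq nat) k := if k == 0 then size T else k.

Lemma text_rcons (T : seq nat) : is_text T ->
  T = rcons (take (size T).-1 T) (last 0 T).
Proof.
move=> hT; have n0 := text_pos hT.
rewrite last_nth // -take_rcons; last by lia.
have -> : (size T).-1.+1 = size T by lia.
by rewrite take_size.
Qed.

Lemma text_all (T : seq nat) : is_text T -> all (fun c => last 0 T < c) (take (size T).-1 T).
Proof. by case/andP. Qed.

Lemma lex_head_lt d c u v : d < c -> lex_lt (d :: u) (c :: v).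
Proof. by move=> h /=; rewrite h. Qed.

Lemma lex_head_gt d c u v : d < c -> lex_lt (c :: v) (d :: u) = false.
Proof. by move=> h /=; rewrite ltnNge (ltnW h) /= (gtn_eqF h). Qed.

Lemma rev_take_ne (T : seq nat) a : is_text T -> 1 <= a < size T ->
  exists c x, rev (take a T) = c :: x /\ last 0 T < c.
Proof.
move=> hT ha; case: a ha => // a ha.
rewrite take_rcons; last by lia.
rewrite rev_rcons; exists (nth 0 T a), (rev (take a T)); split => //.
apply: text_lt => //; lia.
Qed.

Lemma rot_colex (T : seq nat) a b : is_text T -> a < size T -> b < size T ->
  colex_lt (rot a T) (rot b T) = colex_lt (take (phi T a) T) (take (phi T b) T).
Proof.
move=> hT ha hb; have n0 := text_pos hT.
set T' := take (size T).-1 T; set d := last 0 T.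
have eT := text_rcons hT; rewrite -/T' -/d in eT.
have sT' : size T' = (size T).-1 by rewrite size_takel //; lia.
have hall := text_all hT; rewrite -/T' -/d in hall.
have revrot : forall k, 0 < k < size T -> rev (rot k T) = rev (take k T) ++ d :: rev (drop k T') /\ take k T = take k T'.
  move=> k hk; rewrite /rot.
  have tk : take k T = take k T' by rewrite eT -cats1 takel_cat //; lia.
  split => //; rewrite rev_cat tk; congr (_ ++ _).
  by rewrite eT drop_rcons ?rev_rcons //; lia.
have revT : rev T = d :: rev T' by rewrite {1}eT rev_rcons.
have allk : forall k, k < size T -> all (fun c => d < c) (rev (take k T')).
  move=> k hk; rewrite all_rev; apply/allP => c /mem_take hc; exact: (allP hall).
rewrite /phi /colex_lt.
case: (eqVneq a 0) => [->|a0]; case: (eqVneq b 0) => [->|b0].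
- by rewrite rot0 take_size.
- rewrite rot0 take_size revT.
  have [hr tk] := revrot b (ltac:(lia)).
  rewrite hr; have [c [x [ex dc]]] := rev_take_ne hT (ltac:(lia) : 1 <= b < size T).
  by rewrite ex /= dc.
- rewrite rot0 take_size revT.
  have [hr tk] := revrot a (ltac:(lia)).
  rewrite hr; have [c [x [ex dc]]] := rev_take_ne hT (ltac:(lia) : 1 <= a < size T).
  by rewrite ex /= ltnNge (ltnW dc) /= (gtn_eqF dc).
- have [hra tka] := revrot a (ltac:(lia)).
  have [hrb tkb] := revrot b (ltac:(lia)).
  rewrite hra hrb.
  case: (eqVneq a b) => [->|ab]; first by rewrite !lex_irr.
  rewrite tka tkb lex_dollar //; try exact: allk.
  move=> /rev_inj E; move: ab; rewrite (@take_inj T' a b) ?eqxx //; lia.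
Qed.

Lemma rot_inj (T : seq nat) a b : is_text T -> a < size T -> b < size T -> rot a T = rot b T -> a = b.
Proof.
move=> hT ha hb E; case: (eqVneq a b) => // ne; exfalso.
have pne : take (phi T a) T <> take (phi T b) T.
  move=> /take_inj; rewrite /phi; case: eqP; case: eqP; lia.
case/orP: (colex_total pne); rewrite -rot_colex // E colex_irr //.
Qed.

Lemma head_rot (T : seq nat) f : f < size T -> head 0 (rot f T) = nth 0 T f.
Proof. by move=> hf; rewrite /rot (drop_nth 0 hf). Qed.

Lemma ocmp (T : seq nat) a b l : take l (drop a.-1 T) = take l (drop b.-1 T) ->
  colex_lt (take (a.-1 + l) T) (take (b.-1 + l) T) = colex_lt (take a.-1 T) (take b.-1 T).
Proof. by move=> E; rewrite !takeD E colex_catr. Qed.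

Lemma take1_drop (T : seq nat) a : a < size T -> take 1 (drop a T) = [:: nth 0 T a].
Proof. by move=> h; rewrite (drop_nth 0 h) /= take0. Qed.

Lemma IPA_char (T : seq nat) a b : 1 <= a <= size T -> 1 <= b <= size T ->
  nth 0 T a.-1 = nth 0 T b.-1 ->
  (IPA T a < IPA T b) = colex_lt (take a.-1 T) (take b.-1 T).
Proof.
move=> ha hb e.
have ea : a.-1 + 1 = a by lia.
have eb : b.-1 + 1 = b by lia.
rewrite IPA_lt // -(@ocmp T a b 1) ?ea ?eb //.
by rewrite !take1_drop ?e //; lia.
Qed.

Lemma take_succ (T : seq nat) a l : a + l < size T ->
  take l.+1 (drop a T) = take l (drop a T) ++ [:: nth 0 T (a + l)].
Proof.
move=> h; rewrite (take_nth 0) ?size_drop; last by lia.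
by rewrite nth_drop cats1.
Qed.

Lemma rlce_ge_char (T : seq nat) a b : a <= size T -> b <= size T -> 1 <= a -> 1 <= b ->
  nth 0 T a.-1 = nth 0 T b.-1 -> 1 <= rlce T a b.
Proof.
move=> ha hb a1 b1 e; apply: lcp_ge; first by rewrite size_drop; lia.
by rewrite !take1_drop ?e //; lia.
Qed.

Lemma key (T : seq nat) j f : is_text T -> j \in st_colex_minus T -> f < size T ->
  colex_lt (rot f T) (rot j.-1 T) -> nth 0 T f = nth 0 T j.-1 ->
  (forall g, g < size T -> colex_lt (rot f T) (rot g T) -> ~~ colex_lt (rot g T) (rot j.-1 T)) ->
  False.
Proof.
move=> hT /mem_S [i [hi ej]] hf hlt hc hbet.
have n0 := text_pos hT.
have jb := LPF_bound hT hi.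
have hj : j.-1 < size T by lia.
have hlt' := hlt; rewrite rot_colex // in hlt'.
have phif : 1 <= phi T f <= size T by rewrite /phi; case: ifP => /eqP ?; lia.
case: (posnP (LPF T i)) => [l0|lpos].
-
  rewrite l0 addn0 in ej; subst j.
  case: (eqVneq i 1) => [i1|i1].
    subst i; move: hlt'; rewrite /phi /= (negbTE (pre_n_min hT phif)) //.
  have phie : phi T i.-1 = i.-1 by rewrite /phi; case: eqP => //; lia.
  rewrite phie in hlt'.
  have cf : colex_lt (take f T) (take i.-1 T).
    case: (eqVneq f 0) => [f0|f0].
      subst f; rewrite take0 /colex_lt /=.
      have [c [x [ex _]]] := rev_take_ne hT (ltac:(lia) : 1 <= i.-1 < size T).
      by rewrite ex.
    by move: hlt'; rewrite /phi (negbTE f0).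
  have hI : IPA T f.+1 < IPA T i by rewrite IPA_char //=; lia.
  have := LPF_ge (ltac:(lia) : 1 <= f.+1 <= size T) hI; rewrite l0 leqn0 => /eqP h0.
  have := @rlce_ge_char T f.+1 i (ltac:(lia)) (ltac:(lia)) (ltac:(lia)) (ltac:(lia)) hc.
  by rewrite h0.
-
  set l := LPF T i in ej jb lpos.
  case: (LPF_wit lpos) => j' [hj' lt' el]; rewrite -/l in el.
  move: el; rewrite /rlce /suffix_of => el.
  have sz1 := lcp_le_size (drop j'.-1 T) (drop i.-1 T); rewrite el size_drop in sz1.
  have sz2 := lcp_le_sizer (drop j'.-1 T) (drop i.-1 T); rewrite el size_drop in sz2.
  have ht := lcp_take (drop j'.-1 T) (drop i.-1 T); rewrite el in ht.
  set w := take l (drop i.-1 T) in ht.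
  have wn : forall k, k < l -> nth 0 w k = nth 0 T (i.-1 + k).
    by move=> k hk; rewrite /w nth_take // nth_drop.
  have wn' : forall k, k < l -> nth 0 w k = nth 0 T (j'.-1 + k).
    by move=> k hk; rewrite -ht nth_take // nth_drop.
  have ee : j.-1 = i.-1 + l by lia.
  rewrite ee in hlt hc hbet hlt' hj.
  have lastlt : forall p, p < (size T).-1 -> nth 0 T p = nth 0 T (size T).-1 -> False.
    move=> p hp E; have := text_lt hT hp; by rewrite last_nth // E ltnn.
  set g := j'.-1 + l.
  have hg : g < size T.
    case: (ltngtP g (size T)) => //; first by lia.
    move=> gE; exfalso; apply: (lastlt (i.-1 + l.-1)); first by lia.
    have h1 := wn l.-1 (ltac:(lia)); rewrite wn' in h1; last by lia.
    by rewrite -h1; congr (nth 0 T _); rewrite /g in gE; lia.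
  have phig : phi T g = g by rewrite /phi; case: eqP => //; rewrite /g; lia.
  have phie : phi T (i.-1 + l) = i.-1 + l by rewrite /phi; case: eqP => //; lia.
  rewrite phie in hlt'.
  have c1 : nth 0 T j'.-1 = nth 0 T i.-1.
    have := wn 0 lpos; rewrite wn' // !addn0 => ->//.
  have hpe : colex_lt (take g T) (take (i.-1 + l) T).
    rewrite /g ocmp //; by rewrite -IPA_char.
  have nfg : ~~ colex_lt (rot f T) (rot g T).
    apply/negP => h; have := hbet g hg h; by rewrite rot_colex // phig phie hpe.
  rewrite rot_colex // phig in nfg.
  have [y ey] : exists y, rev (take (phi T f) T) = rev w ++ y.
    apply: (@lex_interval (rev w) (rev (take j'.-1 T)) (rev (take i.-1 T))).
      move: nfg; rewrite /colex_lt /g takeD -/(suffix_of T j') /suffix_of ht rev_cat //.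
    move: (colex_asym hlt'); rewrite /colex_lt takeD rev_cat //.
  have ef : take (phi T f) T = rev y ++ w by rewrite -(revK (take _ T)) ey rev_cat revK.
  have szw : size w = l by rewrite /w size_takel // size_drop; lia.
  have szf : phi T f = size (rev y) + l by rewrite -szw -size_cat -ef size_takel //; lia.
  have nthf : nth 0 T (phi T f).-1 = nth 0 T (i.-1 + l.-1).
    rewrite -(nth_take 0 (ltac:(lia) : (phi T f).-1 < phi T f)) ef nth_cat.
    have -> : ((phi T f).-1 < size (rev y)) = false by apply/negbTE; lia.
    by rewrite wn //; [congr (nth 0 T _)|]; lia.
  have fn : phi T f < size T.
    case: (ltngtP (phi T f) (size T)) => //; first by lia.
    move=> E; exfalso; apply: (lastlt (i.-1 + l.-1)); first by lia.
    by rewrite -nthf E.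
  have ephif : phi T f = f by move: fn; rewrite /phi; case: ifP => // _; rewrite ltnn.
  rewrite ephif in ef szf nthf hlt'.
  set i2 := (size (rev y)).+1.
  have hi2 : 1 <= i2 <= size T by rewrite /i2; lia.
  have w2 : take l (drop i2.-1 T) = w.
    rewrite take_drop /i2 /= addnC -szf ef drop_cat ltnn subnn drop0 //.
  have pf : take (i2.-1 + l) T = take f T by rewrite szf.
  have c2 : nth 0 T i2.-1 = nth 0 T i.-1.
    have := congr1 (nth 0 ^~ 0) w2; rewrite nth_take // nth_drop addn0 => ->.
    by rewrite wn // addn0.
  have hI : IPA T i2 < IPA T i.
    rewrite IPA_char // -(@ocmp T i2 i l); last by rewrite w2.
    by rewrite pf.
  have := LPF_ge hi2 hI; rewrite -/l => hle.
  have : l.+1 <= rlce T i2 i.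
    apply: lcp_ge; first by rewrite size_drop; lia.
    rewrite !take_succ; try lia.
    rewrite w2 -/w; congr (_ ++ [:: _]).
    by rewrite -hc; congr (nth 0 T _); lia.
  lia.
Qed.

Lemma runs_aux (x : nat) s :
  count id [seq p.1 != p.2 | p <- zip (x :: s) s] =
  count (fun q => nth 0 (x :: s) q.-1 != nth 0 (x :: s) q) (iota 1 (size s)).
Proof.
elim: s x => [|y t IH] x //=.
rewrite IH; congr (_ + _).
rewrite (iotaDl 1 1) count_map; apply: eq_in_count => q; rewrite mem_iota => hq /=.
by case: q hq.
Qed.

Lemma runs_count (h : seq nat) :
  runs h = count (fun q => (q == 0) || (nth 0 h q.-1 != nth 0 h q)) (iota 0 (size h)).
Proof.
case: h => [|x s] //=; rewrite runs_aux add1n; congr (_.+1).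
apply: eq_in_count => q; rewrite mem_iota => hq /=.
by case: q hq.
Qed.

Definition leR := fun u v : seq nat => ~~ colex_lt v u.

Lemma part1 (T : seq nat) : is_text T -> size (st_colex_minus T) <= rbar T.
Proof.
move=> hT; have n0 := text_pos hT.
set R := sort leR [seq rot k T | k <- iota 0 (size T)].
have eR : rbar T = runs [seq head 0 u | u <- R] by [].
have szR : size R = size T by rewrite size_sort size_map size_iota.
have memR : forall u, u \in R -> exists2 k, k < size T & u = rot k T.
  move=> u; rewrite mem_sort => /mapP [k]; rewrite mem_iota => hk ->.
  by exists k => //; lia.
have inR : forall k, k < size T -> rot k T \in R.
  move=> k hk; rewrite mem_sort; apply/mapP; exists k => //; rewrite mem_iota; lia.
have uR : uniq R.
  rewrite sort_uniq map_inj_in_uniq ?iota_uniq // => a b.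
  rewrite !mem_iota => ha hb; apply: rot_inj => //; lia.
have leRnth : forall a b, a <= b -> b < size T -> leR (nth [::] R a) (nth [::] R b).
  have tr : transitive leR by move=> y x z; rewrite /leR => h1 h2; exact: colex_le_trans h1 h2.
  have rf : reflexive leR by move=> x; rewrite /leR colex_irr.
  have so : sorted leR R.
    apply: sort_sorted => x y; rewrite /leR.
    by case h: (colex_lt y x) => //=; rewrite (negbTE (colex_asym h)).
  move=> a b ab bs; apply: (sorted_leq_nth tr rf [::] so) => //; rewrite inE szR; lia.
set h := [seq head 0 u | u <- R].
rewrite eR runs_count size_map szR -size_filter.
set g := fun j => index (rot j.-1 T) R.
have uS : uniq (st_colex_minus T) by rewrite sort_uniq undup_uniq.
have jS : forall j, j \in st_colex_minus T -> 1 <= j <= size T.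
  move=> j /mem_S [i [hi ->]]; have := LPF_bound hT hi; lia.
rewrite -(size_map g); apply: uniq_leq_size.
  rewrite map_inj_in_uniq // => a b ha hb /= E.
  have ea := jS a ha; have eb := jS b hb.
  have := congr1 (nth [::] R) E; rewrite !nth_index ?inR //; try lia.
  move/rot_inj => /(_ hT) H; have: a.-1 = b.-1 by apply: H; lia.
  lia.
move=> q /mapP [j jin ->]; have hj := jS j jin.
have hjR : rot j.-1 T \in R by apply: inR; lia.
have qlt : g j < size T by rewrite -szR index_mem.
have eq : nth [::] R (g j) = rot j.-1 T by rewrite nth_index.
rewrite mem_filter mem_iota qlt andbT /=.
case: (eqVneq (g j) 0) => //= q0.
have qm : (g j).-1 < size T by lia.
have hm : (g j).-1 < size R by rewrite szR.
have [f hf ef] := memR (nth [::] R (g j).-1) (mem_nth [::] hm).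
rewrite /h !(nth_map [::]) ?szR // ef eq !head_rot //; try lia.
rewrite ?leq0n ?andbT; apply/negP => /eqP hc.
have ne : nth [::] R (g j).-1 != nth [::] R (g j) by rewrite nth_uniq ?szR //; lia.
rewrite ef eq in ne.
have hle := leRnth (g j).-1 (g j) (ltac:(lia)) qlt; rewrite ef eq /leR in hle.
have hlt : colex_lt (rot f T) (rot j.-1 T).
  by case: (colex_tri hle) => // E; rewrite E eqxx in ne.
apply: (key hT jin hf hlt hc) => g' hg' h1; apply/negP => h2.
have hg'R := inR g' hg'.
have q'lt : index (rot g' T) R < size T by rewrite -szR index_mem.
case: (leqP (g j) (index (rot g' T) R)) => hq.
  have := leRnth _ _ hq q'lt; rewrite eq nth_index // /leR h2 //.
have hq' : index (rot g' T) R <= (g j).-1 by clear -hq q0; lia.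
have := leRnth (index (rot g' T) R) (g j).-1 hq' qm.
by rewrite ef nth_index // /leR h1.
Qed.

Definition ppred (w s : seq nat) : bool := ~~ lex_lt (rev s) (rev w).

Fixpoint bs (B : nat) (w : seq nat) (fuel lo hi : nat) (kont : nat -> prog) : prog :=
  match fuel with
  | 0 => kont lo
  | fuel'.+1 =>
    if lo < hi then
      ReadBlock (((lo + hi) %/ 2) %/ B) (fun blk =>
        let j := nth 0 blk (((lo + hi) %/ 2) %% B) in
        Extract (j - size w).+1 (minn j (size w)) (fun s =>
          if ppred w s then bs B w fuel' lo ((lo + hi) %/ 2) kont
          else bs B w fuel' ((lo + hi) %/ 2).+1 hi kont))
    else kont lo
  end.

Definition stage (B N : nat) (P : seq nat) (k : nat) (next : nat -> prog) (q : nat) : prog :=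
  ReadBlock (q %/ B) (fun blk =>
    let j := nth 0 blk (q %% B) in
    Extract (j - k).+1 (size P) (fun s =>
      if s == P then Ret (j - k).+1 else next (lcp s P).+1)).

Fixpoint loop (B N : nat) (P : seq nat) (fuel k : nat) : prog :=
  match fuel with
  | 0 => Ret 0
  | fuel'.+1 => bs B (take k P) N.+1 0 N (stage B N P k (loop B N P fuel'))
  end.

Definition alg (n B N : nat) (P : seq nat) : prog := loop B N P (size P) 1.

Definition pg (T w : seq nat) (x : nat) : bool := ~~ lex_lt (rev (take x T)) (rev w).

Lemma ppred_pg (T w : seq nat) j : j <= size T ->
  ppred w (extract T (j - size w).+1 (minn j (size w))) = pg T w j.
Proof.
move=> hj; rewrite /extract /= /ppred /pg take_drop.
have -> : minn j (size w) + (j - size w) = j by lia.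
rewrite -{2}(cat_take_drop (j - size w) (take j T)) rev_cat.
case: (leqP (size w) j) => hk.
- rewrite lex_catl //; rewrite !size_rev size_drop size_takel //; lia.
- have -> : j - size w = 0 by lia.
  by rewrite take0 drop0 cats0.
Qed.

Lemma block_nth (A : seq nat) B q : 0 < B -> nth 0 (take B (drop (q %/ B * B) A)) (q %% B) = nth 0 A q.
Proof.
move=> hB; rewrite nth_take ?ltn_pmod // nth_drop -divn_eq //.
Qed.

Definition cb (len : nat) := if len == 0 then 0 else (trunc_log 2 len).+1.

Lemma cb_step len len' : 0 < len -> len' <= len %/ 2 -> (cb len').+1 <= cb len.
Proof.
move=> h1 h2; rewrite /cb.
have l0 : len != 0 by lia.
rewrite (negbTE l0); case: eqP => [_|/eqP l0'] //.
have ll : 1 < len by lia.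
rewrite (trunc_log2S ll) !ltnS -divn2; exact: leq_trunc_log.
Qed.

Lemma bs_spec (T A : seq nat) B w fuel lo hi kont :
  0 < B -> hi <= size A -> lo <= hi -> hi - lo < fuel ->
  (forall x, x \in A -> x <= size T) ->
  (forall a b, a <= b -> b < size A -> pg T w (nth 0 A a) -> pg T w (nth 0 A b)) ->
  (forall q, q < lo -> ~~ pg T w (nth 0 A q)) ->
  (hi < size A -> pg T w (nth 0 A hi)) ->
  exists q c, [/\ (forall q', q' < q -> ~~ pg T w (nth 0 A q')),
     (q < size A -> pg T w (nth 0 A q)), q <= size A,
     c <= cb (hi - lo) * (2 + size w %/ B) &
     run T A B (bs B w fuel lo hi kont) = ((run T A B (kont q)).1, c + (run T A B (kont q)).2)].
Proof.
move=> hB; elim: fuel lo hi => [|fuel IH] lo hi hiA lohi hf hA mono hlo hhi; first by lia.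
rewrite /=; case: ifP => lh; last first.
  have e : lo = hi by lia.
  exists lo, 0; split => //; [by rewrite e|lia|by rewrite add0n; case: (run _ _ _ _)].
set mid := (lo + hi) %/ 2.
have hm : lo <= mid < hi by rewrite /mid; lia.
rewrite /= block_nth //.
have mA : nth 0 A mid \in A by apply: mem_nth; apply: (leq_trans _ hiA); case/andP: hm.
rewrite ppred_pg; last exact: hA.
case: ifP => pm.
- have [q [c [h1 h2 h3 h4 h5]]] := IH lo mid (ltac:(lia)) (ltac:(lia)) (ltac:(lia)) hA mono hlo (fun _ => pm).
  exists q, (1 + (1 + minn (nth 0 A mid) (size w) %/ B) + c); split => //.
    have := cb_step (len := hi - lo) (len' := mid - lo) (ltac:(lia)) (ltac:(rewrite /mid; lia)).
    have : minn (nth 0 A mid) (size w) %/ B <= size w %/ B by apply: leq_div2r; lia.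
    nia.
  by rewrite h5 /=; congr (_, _); lia.
- have hlo' : forall q, q < mid.+1 -> ~~ pg T w (nth 0 A q).
    move=> q hq; case: (ltnP q lo) => hq'; first exact: hlo.
    apply/negP => pq; have := mono q mid (ltac:(lia)) (ltac:(lia)) pq; by rewrite pm.
  have [q [c [h1 h2 h3 h4 h5]]] := IH mid.+1 hi hiA (ltac:(lia)) (ltac:(lia)) hA mono hlo' hhi.
  exists q, (1 + (1 + minn (nth 0 A mid) (size w) %/ B) + c); split => //.
    have := cb_step (len := hi - lo) (len' := hi - mid.+1) (ltac:(lia)) (ltac:(rewrite /mid; lia)).
    have : minn (nth 0 A mid) (size w) %/ B <= size w %/ B by apply: leq_div2r; lia.
    nia.
  by rewrite h5 /=; congr (_, _); lia.
Qed.

Definition prim (T w : seq nat) (i : nat) : Prop :=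
  occurs T w i /\ forall j, occurs T w j -> IPA T i <= IPA T j.

Lemma occursP (T w : seq nat) i :
  occurs T w i = [&& 1 <= i, i <= size T & take (size w) (drop i.-1 T) == w].
Proof. by rewrite /occurs /extract andbA. Qed.

Lemma prim_exists (T w : seq nat) : (exists i, occurs T w i) -> exists i, prim T w i.
Proof.
move=> [i0 o0].
have ex : exists v, has (fun i => occurs T w i && (IPA T i == v)) (iota 1 (size T)).
  exists (IPA T i0); apply/hasP; exists i0; last by rewrite o0 eqxx.
  move: o0; rewrite occursP mem_iota; case/and3P => *; lia.
case: (ex_minnP ex) => v /hasP [i _ /andP [oi /eqP ei]] hmin.
exists i; split => // j oj; rewrite ei; apply: hmin; apply/hasP; exists j; last by rewrite oj eqxx.
move: oj; rewrite occursP mem_iota; case/and3P => *; lia.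
Qed.

Lemma occ_take (T P : seq nat) i k : occurs T P i -> k <= size P -> occurs T (take k P) i.
Proof.
rewrite !occursP => /and3P [h1 h2 /eqP h3] hk; rewrite h1 h2 /= size_takel //.
by rewrite -h3 take_takel.
Qed.

Lemma occ_size (T w : seq nat) i : occurs T w i -> i.-1 + size w <= size T.
Proof.
rewrite occursP => /and3P [h1 h2 /eqP h3].
have := congr1 size h3; rewrite size_take_min size_drop => e.
have : size w <= size T - i.-1 by rewrite -{1}e geq_minr.
lia.
Qed.

Lemma prim_lpf_ub (T w : seq nat) i j : prim T w i -> 1 <= j <= size T ->
  IPA T j < IPA T i -> rlce T j i < size w.
Proof.
move=> [oi hi] hj lt; rewrite ltnNge; apply/negP => hle.
have := lcp_ge_take hle; rewrite /suffix_of => ht.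
have oj : occurs T w j.
  move: oi; rewrite !occursP => /and3P [_ _ /eqP e]; rewrite ht e eqxx andbT; lia.
by have := hi j oj; rewrite leqNgt lt.
Qed.

Lemma pg_mono (T w : seq nat) a b : ~~ colex_lt (take b T) (take a T) -> pg T w a -> pg T w b.
Proof. move=> hab; rewrite /pg => ha; exact: lex_le_trans ha hab. Qed.

Lemma take_occ (T w : seq nat) i : occurs T w i -> take (i.-1 + size w) T = take i.-1 T ++ w.
Proof. by rewrite takeD occursP => /and3P [_ _ /eqP ->]. Qed.

Lemma pg_bp (T w : seq nat) i : occurs T w i -> pg T w (i.-1 + size w).
Proof.
by move=> oi; rewrite /pg take_occ // rev_cat lex_catl // lex_irr.
Qed.

Lemma bs_target (T w : seq nat) i x : is_text T -> 0 < size w -> prim T w i ->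
  x \in st_colex_minus T -> pg T w x ->
  ~~ colex_lt (take (i.-1 + size w) T) (take x T) -> x = i.-1 + size w.
Proof.
move=> hT w0 [oi hmin] xS px hle.
have xn : x <= size T by case: (mem_S xS) => i' [hi' ->]; exact: LPF_bound.
have hi := oi; rewrite occursP in hi; case/and3P: hi => i1 in_ _.
have [y ey] : exists y, rev (take x T) = rev w ++ y.
  apply: (@lex_interval (rev w) [::] (rev (take i.-1 T))).
    by rewrite cats0.
  by move: hle; rewrite take_occ // /colex_lt rev_cat.
have ex : take x T = rev y ++ w by rewrite -(revK (take _ T)) ey rev_cat revK.
have szx : x = size (rev y) + size w by rewrite -size_cat -ex size_takel.
set i2 := (size (rev y)).+1.
have w2 : take (size w) (drop i2.-1 T) = w.
  rewrite take_drop /i2 /= addnC -szx ex drop_cat ltnn subnn drop0 //.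
have o2 : occurs T w i2 by rewrite occursP w2 eqxx andbT /i2; lia.
have c2 : nth 0 T i2.-1 = nth 0 T i.-1.
  have := congr1 (nth 0 ^~ 0) w2; rewrite nth_take // nth_drop addn0 => ->.
  move: oi; rewrite occursP => /and3P [_ _ /eqP h].
  by have := congr1 (nth 0 ^~ 0) h; rewrite nth_take // nth_drop addn0 => ->.
have pf : take (i2.-1 + size w) T = take x T by rewrite szx.
have : ~~ (IPA T i < IPA T i2).
  rewrite IPA_char //; try lia.
  rewrite -(@ocmp T i i2 (size w)); last first.
    by rewrite w2; move: oi; rewrite occursP => /and3P [_ _ /eqP ->].
  by rewrite pf.
rewrite -leqNgt => h2.
have e : IPA T i2 = IPA T i by apply/eqP; rewrite eqn_leq h2 hmin.
have := IPA_inj (ltac:(lia) : 1 <= i2 <= size T) (ltac:(lia) : 1 <= i <= size T) e.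
rewrite /i2 => e2; lia.
Qed.

Lemma undup_two (s : seq nat) x y : x \in s -> y \in s -> x != y -> 1 < size (undup s).
Proof.
move=> xs ys xy.
have : uniq [:: x; y] by rewrite /= inE xy.
move/uniq_leq_size => /(_ (undup s)) h.
by apply: h => z; rewrite !inE mem_undup => /orP [/eqP->|/eqP->].
Qed.

Lemma take_size_ge (s t : seq nat) k : take k s = t -> size t = k -> k <= size s.
Proof. move=> e st; have := congr1 size e; rewrite size_take_min st => h; by rewrite -{1}h geq_minr. Qed.

Lemma next_bp (T P : seq nat) k i : is_text T -> 1 <= k <= size P ->
  (exists i0, occurs T P i0) -> prim T (take k P) i ->
  extract T i (size P) != P ->
  [/\ k <= lcp (extract T i (size P)) P, lcp (extract T i (size P)) P < size P,
      st_node T (take (lcp (extract T i (size P)) P) P) &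
      exists i', prim T (take (lcp (extract T i (size P)) P).+1 P) i' /\
                 LPF T i' = lcp (extract T i (size P)) P].
Proof.
move=> hT hk [i0 o0] [oi hmin] neq.
have n0 := text_pos hT.
set s := extract T i (size P) in neq *.
set L := lcp s P.
have oi' := oi; rewrite occursP size_takel in oi'; last by lia.
case/and3P: oi' => i1 iN /eqP tk.
have es : s = take (size P) (drop i.-1 T) by [].
have tks : take k s = take k P by rewrite es take_takel //; lia.
have szd : k <= size (drop i.-1 T) by apply: (take_size_ge tk); rewrite size_takel //; lia.
have szs : size s = minn (size P) (size (drop i.-1 T)) by rewrite es size_take_min.
have kL : k <= L by apply: lcp_ge => //; rewrite szs; lia.
have Lm : L < size P.
  have := lcp_le_sizer s P; rewrite -/L leq_eqVlt => /orP [/eqP eL|//].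
  exfalso; move/negP: neq; apply; apply/eqP.
  have := lcp_take s P; rewrite -/L eL take_size => <-.
  by rewrite take_oversize // szs; lia.
have tL : take L s = take L P by exact: lcp_take.
have Ls : L <= size s by exact: lcp_le_size.
have tLd : take L (drop i.-1 T) = take L P by rewrite -tL es take_takel //; lia.
have Ld : L <= size (drop i.-1 T) by rewrite szs in Ls; lia.
have [i' [oi' hmin']] := prim_exists (ltac:(exists i0; apply: occ_take o0 _; lia) : exists i, occurs T (take L.+1 P) i).
have oi'' := oi'; rewrite occursP size_takel in oi''; last by lia.
case/and3P: oi'' => i'1 i'N /eqP tk'.
have szd' : L.+1 <= size (drop i'.-1 T) by apply: (take_size_ge tk'); rewrite size_takel //; lia.
have ne : i != i'.
  apply/eqP => E; subst i'.
  have : L.+1 <= L; last by rewrite ltnn.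
  apply: lcp_ge; first by rewrite szs; lia.
  by rewrite es take_takel // tk'; lia.
have lt : IPA T i < IPA T i'.
  rewrite ltn_neqAle; apply/andP; split.
    by apply/eqP => /IPA_inj E; move/eqP: ne; apply; apply: E; lia.
  apply: hmin; rewrite occursP size_takel; last by lia.
  rewrite i'1 i'N /=; apply/eqP.
  have kk : k <= L.+1 by lia.
  by rewrite -[LHS](take_takel _ kk) tk' take_takel.
split => //.
- rewrite /st_node; apply/andP; split.
    have : 0 < size (take L P) by rewrite size_takel; lia.
    by case: (take L P).
  apply/orP; left; rewrite /right_maximal /followers.
  have fi' : nth 0 T (i'.-1 + size (take L P)) \in
      [seq nth 0 T (i.-1 + size (take L P)) | i <- iota 1 (size T) &
        (i.-1 + size (take L P) < size T) && (extract T i (size (take L P)) == take L P)].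
    apply/mapP; exists i' => //; rewrite mem_filter mem_iota size_takel; last by lia.
    rewrite /extract -(take_takel _ (ltac:(lia) : L <= L.+1)) tk' take_takel // eqxx andbT.
    rewrite size_drop in szd'; apply/andP; split; lia.
  have vi' : nth 0 T (i'.-1 + size (take L P)) = nth 0 P L.
    rewrite size_takel; last by lia.
    by rewrite -nth_drop -(nth_take 0 (ltac:(lia) : L < L.+1)) tk' nth_take.
  case: (ltnP (i.-1 + L) (size T)) => hiL.
  + have fi : nth 0 T (i.-1 + size (take L P)) \in
        [seq nth 0 T (i.-1 + size (take L P)) | i <- iota 1 (size T) &
          (i.-1 + size (take L P) < size T) && (extract T i (size (take L P)) == take L P)].
      apply/mapP; exists i => //; rewrite mem_filter mem_iota size_takel; last by lia.
      rewrite /extract tLd eqxx andbT; apply/andP; split; lia.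
    apply: (undup_two fi fi'); rewrite vi' size_takel; last by lia.
    have Lsz : L < size s by rewrite szs size_drop; lia.
    have := lcp_nth Lsz Lm; rewrite -/L.
    by rewrite es nth_take // nth_drop.
  + exfalso.
    have eN : i.-1 + L = size T by rewrite size_drop in Ld; lia.
    have L0 : 0 < L by lia.
    have h1 : nth 0 T (size T).-1 = nth 0 P L.-1.
      rewrite -eN.
      have -> : (i.-1 + L).-1 = i.-1 + L.-1 by lia.
      by rewrite -nth_drop -(nth_take 0 (ltac:(lia) : L.-1 < L)) tLd nth_take //; lia.
    have h2 : nth 0 T (i'.-1 + L.-1) = nth 0 P L.-1.
      by rewrite -nth_drop -(nth_take 0 (ltac:(lia) : L.-1 < L.+1)) tk' nth_take //; lia.
    have := text_lt (p := i'.-1 + L.-1) hT.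
    rewrite last_nth // h1 -h2 ltnn => H; suff : false by []; apply: H; rewrite size_drop in szd'; lia.
- exists i'; split => //; apply: LPF_eq.
    move=> j hj ltj; have := prim_lpf_ub (conj oi' hmin') hj ltj; rewrite size_takel; lia.
  right; exists i; split => //; first lia.
  apply: lcp_ge; first by rewrite /suffix_of; lia.
  have LL : L <= L.+1 by lia.
  by rewrite /suffix_of tLd -[RHS](take_takel _ LL) tk' take_takel.
Qed.

Lemma loop_spec (T : seq nat) B P fuel k : is_text T -> 0 < B -> (exists i0, occurs T P i0) ->
  1 <= k <= size P -> size P - k < fuel ->
  (exists i, prim T (take k P) i /\ i.-1 + k \in st_colex_minus T) ->
  is_primary T P (run T (st_colex_minus T) B (loop B (size (st_colex_minus T)) P fuel k)).1 /\
  (run T (st_colex_minus T) B (loop B (size (st_colex_minus T)) P fuel k)).2 <=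
    4 * (count (fun L => st_node T (take L P)) (iota k (size P - k))).+1 *
    ((trunc_log 2 (size (st_colex_minus T))).+1 * (1 + size P %/ B)).
Proof.
move=> hT hB hP; set S := st_colex_minus T; set N := size S.
elim: fuel k => [|fuel IH] k hk hf; first by lia.
move=> [i [pi bS]].
set w := take k P.
have szw : size w = k by rewrite size_takel //; lia.
have hA : forall x, x \in S -> x <= size T.
  by move=> x /mem_S [i' [hi' ->]]; exact: LPF_bound.
have mono : forall a b, a <= b -> b < size S -> pg T w (nth 0 S a) -> pg T w (nth 0 S b).
  move=> a b ab bS'; apply: pg_mono; exact: (S_le_nth ab bS').
have [q [c [h1 h2 h3 h4 h5]]] := @bs_spec T S B w N.+1 0 N (stage B N P k (loop B N P fuel))
   hB (leqnn _) (leq0n _) (ltac:(lia)) hA mono (fun q h => ltac:(done)) (fun h => ltac:(by rewrite ltnn in h)).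
change (loop B N P fuel.+1 k) with (bs B w N.+1 0 N (stage B N P k (loop B N P fuel))).
rewrite h5 /=.
set t := index (i.-1 + k) S.
have tN : t < N by rewrite /t /N index_mem.
have et : nth 0 S t = i.-1 + k by rewrite nth_index.
have pt : pg T w (nth 0 S t) by rewrite et -szw; apply: pg_bp; case: pi.
have qt : q <= t by rewrite leqNgt; apply/negP => /h1; rewrite pt.
have qN : q < N by lia.
have eq : nth 0 S q = i.-1 + k.
  rewrite -szw; apply: (bs_target hT) => //; first by rewrite szw; lia.
    by apply: mem_nth.
    by apply: h2.
  by rewrite szw -et; apply: (S_le_nth qt).
have oi := pi.1; have i1 : 1 <= i by move: oi; rewrite occursP; case/and3P.
rewrite /stage /= block_nth // eq.
have -> : (i.-1 + k - k).+1 = i by lia.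
have hc : c <= (trunc_log 2 N).+1 * (2 + k %/ B).
  apply: (leq_trans h4); rewrite szw subn0 /cb; case: eqP => _ //; lia.
have kB : k %/ B <= size P %/ B by apply: leq_div2r; lia.
case: ifP => [/eqP sP|sP] /=.
- split.
    split; first by move: oi; rewrite /occurs sP eqxx andbT; case/andP.
    move=> j oj; apply: pi.2; apply: occ_take oj _; lia.
  set X := (trunc_log 2 N).+1; set Y := size P %/ B.
  set Z := X * (1 + Y).
  have hZ : 1 + Y <= Z by rewrite /Z leq_pmull.
  have hc' : c <= 2 * Z.
    apply: (leq_trans hc); rewrite /Z mulnCA leq_mul2l; apply/orP; right.
    by clear -kB; rewrite -/Y in kB; lia.
  apply: (leq_trans _ (leq_mul (leq_mul (leqnn 4) (ltn0Sn _)) (leqnn Z))).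
  rewrite muln1; clear -hc' hZ; lia.
- have [kL Lm sn [i' [pi' lpf]]] := next_bp hT hk hP pi (negbT sP).
  set L := lcp (extract T i (size P)) P in kL Lm sn pi' lpf *.
  have i'1 : 1 <= i' <= size T by move: pi'.1; rewrite occursP => /and3P [-> -> _].
  have bS' : i'.-1 + L.+1 \in S.
    have -> : i'.-1 + L.+1 = i' + LPF T i' by rewrite lpf; clear -i'1; lia.
    exact: S_mem.
  have hL1 : 1 <= L.+1 <= size P by clear -Lm; lia.
  have hL2 : size P - L.+1 < fuel by clear -hf kL Lm; lia.
  have [IH1 IH2] := IH L.+1 hL1 hL2 (ex_intro _ i' (conj pi' bS')).
  split => //.
  set X := (trunc_log 2 N).+1; set Y := size P %/ B.
  set c1 := count _ (iota k (size P - k)).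
  set c2 := count _ (iota L.+1 (size P - L.+1)) in IH2.
  have cc : c2 < c1.
    rewrite /c1 /c2.
    have -> : size P - k = (L - k) + (1 + (size P - L.+1)) by clear -kL Lm; lia.
    rewrite iotaD count_cat iotaD count_cat /=.
    have -> : k + (L - k) = L by clear -kL; lia.
    by rewrite sn addn1 addn0 add1n addnS ltnS leq_addl.
  move: IH2; rewrite -/X -/Y => IH2.
  set Z := X * (1 + Y) in IH2 *.
  have hZ : 1 + Y <= Z by rewrite /Z leq_pmull.
  have hc' : c <= 2 * Z.
    apply: (leq_trans hc); rewrite /Z mulnCA leq_mul2l; apply/orP; right.
    by clear -kB; rewrite -/Y in kB; lia.
  have hfin : 4 * c2.+1 * Z + 4 * Z <= 4 * c1.+1 * Z.
    rewrite -mulnDl; apply: leq_mul => //; clear -cc; lia.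
  clear -hc' hZ IH2 hfin; lia.
Qed.

Theorem lemma44 :
  (forall T : seq nat, is_text T -> size (st_colex_minus T) <= rbar T) /\
  exists (alg : nat -> nat -> nat -> seq nat -> prog) (C : nat),
    forall (T : seq nat) (B : nat) (P : seq nat),
      is_text T -> 0 < B -> 0 < size P -> (exists i, occurs T P i) ->
      let S := st_colex_minus T in
      let r := run T S B (alg (size T) B (size S) P) in
      is_primary T P r.1 /\
      r.2 <= C * locus_node_depth T P * (trunc_log 2 (size S)).+1 * (1 + size P %/ B).
Proof.
split; first exact: part1.
exists alg, 4 => T B P hT hB hP hocc /=.
have [i pi] := prim_exists (ltac:(case: hocc => i0 o0; exists i0; apply: occ_take o0 _; lia) :
   exists i, occurs T (take 1 P) i).
have i1 : 1 <= i <= size T by move: pi.1; rewrite occursP; case/and3P => *; lia.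
have l0 : LPF T i = 0.
  apply: LPF_eq; last by left.
  move=> j hj lt; have := prim_lpf_ub pi hj lt; rewrite size_takel; lia.
have bS : i.-1 + 1 \in st_colex_minus T.
  have -> : i.-1 + 1 = i + LPF T i by rewrite l0; lia.
  exact: S_mem.
have [h1 h2] := loop_spec (fuel := size P) (k := 1) hT hB hocc (ltac:(lia)) (ltac:(lia)) (ex_intro _ i (conj pi bS)).
rewrite /alg; split => //.
apply: (leq_trans h2); rewrite /locus_node_depth -subn1 !mulnA; exact: leqnn.
Qed.
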